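(* For every $n\geq1$ and every $i\in\{1,\dots,N\}$, $$C^{(n+1)}_{-i,i}\cdot v=G_i\, C^{(n)}_{ii}\cdot v-\lambda_i\,C^{(n)}_{-i,i}\cdot v-\sum_{k\in I,\ |k|>i}(-1)^{\bar k}\,C^{(n)}_{k,-k}\cdot v.$$
   Context: Let $N\geq1$, $I=\{-N,\dots,-1,1,\dots,N\}$, and for $k\in I$ put $\bar k=0$ if $k>0$, $\bar k=1$ if $k<0$. The Lie superalgebra $\mathfrak{q}(N)$ over $\mathbb{C}$ is spanned by elements $F_{ij}$ ($i,j\in I$) with $F_{-i,-j}=F_{ij}$ (realized as $F_{ij}=E_{ij}+E_{-i,-j}\in\mathfrak{gl}(N|N)$), $F_{ij}$ of parity $\bar\imath+\bar\jmath\bmod 2$, and supercommutator $$[F_{ij}, F_{kl}] = \delta_{kj} F_{il} - (-1)^{(\bar{\imath}+ \bar{\jmath})(\bar{k} + \bar{l})} \delta_{il} F_{kj} + \delta_{k,-j} F_{-i,l} - (-1)^{(\bar{\imath} + \bar{\jmath})(\bar{k} + \bar{l})} \delta_{-i,l} F_{k,-j}.$$ For $n\geq1$ define $C^{(n)}_{ij}\in U(\mathfrak{q}(N))$ by $$C^{(n)}_{ij} = \sum_{k_1,\ldots,k_{n-1}\in I}F_{ik_1} (-1)^{\bar{k}_1} F_{k_1k_2} (-1)^{\bar{k}_2} \cdots F_{k_{n-2}k_{n-1}} (-1)^{\bar{k}_{n-1}} F_{k_{n-1}j}$$ (so $C^{(1)}_{ij}=F_{ij}$). For $i>0$ let $G_i=F_{-i,i}$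 $(=F_{i,-i})$. Let $V$ be a representation of $\mathfrak{q}(N)$ and $v\in V$ a vector such that $F_{ij}\cdot v=0$ whenever $|i|<|j|$, and $F_{ii}\cdot v=\lambda_i v$ for $i=1,\dots,N$, where $\lambda_1,\dots,\lambda_N\in\mathbb{C}$. *)

(* Defs.v *)
From HB Require Import structures.
From mathcomp Require Import all_boot all_order all_algebra.
Set Implicit Arguments. Unset Strict Implicit. Unset Printing Implicit Defensive.
Import Order.TTheory GRing.Theory Num.Theory.
Local Open Scope ring_scope.

Definition Iseq (N : nat) : seq int :=
  [seq - (Posz k.+1) | k <- iota 0 N] ++ [seq Posz k.+1 | k <- iota 0 N].

(* kbar k = 0 if k > 0, 1 if k < 0 (as a boolean: true = 1). *)
Definition kbar (k : int) : bool := (k < 0).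

Definition parF (i j : int) : bool := kbar i (+) kbar j.

Definition ssign (R : ringType) (i j k l : int) : R :=
  (-1) ^+ (parF i j && parF k l).

(* A module over U(q(N)): operators rho i j (the action of F_ij) on V,
   linear, satisfying F_{-i,-j} = F_{ij} and the defining supercommutator
   relations of q(N), for all indices in I. *)
Definition qN_module (R : fieldType) (V : lmodType R) (N : nat)
    (rho : int -> int -> V -> V) : Prop :=
  [/\ forall i j, linear (rho i j),
      forall i j, i \in Iseq N -> j \in Iseq N -> rho (- i) (- j) = rho i j &
      forall i j k l, i \in Iseq N -> j \in Iseq N -> k \in Iseq N ->
        l \in Iseq N -> forall w : V,
        rho i j (rho k l w) - ssign R i j k l *: rho k l (rho i j w) =
          (if k == j then rho i l w else 0)
          - ssign R i j k l *: (if i == l then rho k j w else 0)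
          + (if k == - j then rho (- i) l w else 0)
          - ssign R i j k l *: (if - i == l then rho k (- j) w else 0)].

(* Cact rho n i j w = C^{(n+1)}_{ij} . w, where
   C^{(1)}_{ij} = F_{ij} and
   C^{(n+1)}_{ij} = sum_{k in I} F_{ik} (-1)^{kbar} C^{(n)}_{kj}
   (the defining iterated sum, grouped from the left factor). *)
Fixpoint Cact (R : fieldType) (V : lmodType R) (N : nat)
    (rho : int -> int -> V -> V) (n : nat) (i j : int) (w : V) : V :=
  match n with
  | 0 => rho i j w
  | n'.+1 => \sum_(k <- Iseq N) ((-1) ^+ kbar k) *: rho i k (Cact N rho n' k j w)
  end.

Definition C (R : fieldType) (V : lmodType R) (N : nat)
    (rho : int -> int -> V -> V) (n : nat) (i j : int) (w : V) : V :=
  Cact N rho n.-1 i j w.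

(* Main.v *)
Require Import Defs.
From HB Require Import structures.
From mathcomp Require Import all_boot all_order all_algebra.
Import Order.TTheory GRing.Theory Num.Theory.
Local Open Scope ring_scope.
Set Implicit Arguments. Unset Strict Implicit.

Lemma linD (R : fieldType) (V : lmodType R) (f : V -> V) : linear f -> forall x y, f (x + y) = f x + f y.
Proof. by move=> L x y; rewrite -[x in LHS]scale1r L !scale1r. Qed.
Lemma linZ (R : fieldType) (V : lmodType R) (f : V -> V) : linear f -> forall a x, f (a *: x) = a *: f x.
Proof. by move=> L a x; apply: (scalable_linear L). Qed.
Lemma lin0 (R : fieldType) (V : lmodType R) (f : V -> V) : linear f -> f 0 = 0.
Proof. by move=> L; have h := linD L 0 0; rewrite addr0 in h; apply/esym/(addrI (f 0)); rewrite addr0 {1}h. Qed.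
Lemma linN (R : fieldType) (V : lmodType R) (f : V -> V) : linear f -> forall x, f (- x) = - f x.
Proof. by move=> L x; rewrite -scaleN1r (linZ L) !scaleN1r. Qed.
Lemma linB (R : fieldType) (V : lmodType R) (f : V -> V) : linear f -> forall x y, f (x - y) = f x - f y.
Proof. by move=> L x y; rewrite (linD L) (linN L). Qed.
Lemma linS (R : fieldType) (V : lmodType R) (f : V -> V) : linear f -> forall (I : Type) (r : seq I) (P : pred I) (F : I -> V),
  f (\sum_(k <- r | P k) F k) = \sum_(k <- r | P k) f (F k).
Proof.
move=> L I r P F; elim/big_rec2: _ => [|k y1 y2 _ <-]; first exact: lin0.
by rewrite (linD L).
Qed.
Lemma linif (R : fieldType) (V : lmodType R) (f : V -> V) : linear f -> forall (b : bool) x,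
  f (if b then x else 0) = if b then f x else 0.
Proof. by move=> L [] x //; apply: lin0. Qed.
Lemma scaleif (R : fieldType) (V : lmodType R) (a : R) (b : bool) (x : V) :
  a *: (if b then x else 0) = if b then a *: x else 0.
Proof. by case: b; rewrite ?scaler0. Qed.

Lemma mem_Iseq N (k : int) : (k \in Iseq N) = (k != 0) && (`|k| <= N)%N.
Proof.
rewrite /Iseq mem_cat; case: k => [n|n].
- rewrite orbC; apply/idP/idP.
  + case/orP => /mapP [j]; rewrite mem_iota => /andP [_ Hj] //.
    by case => ->; rewrite add0n in Hj.
  + case/andP => H0 HN; apply/orP; left; apply/mapP; exists n.-1.
    * by rewrite mem_iota /=; case: n H0 HN.
    * by case: n H0 HN.
- apply/idP/idP.
  + case/orP => /mapP [j]; rewrite mem_iota => /andP [_ Hj] //.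
    by rewrite NegzE => /oppr_inj [->]; rewrite add0n in Hj.
  + move=> /andP [_ HN]; apply/orP; left; apply/mapP; exists n.
    * by rewrite mem_iota /=.
    * by rewrite NegzE.
Qed.

Lemma Iseq_uniq N : uniq (Iseq N).
Proof.
have i1 : injective (fun k : nat => - Posz k.+1) by move=> x y /oppr_inj [].
have i2 : injective (fun k : nat => Posz k.+1) by move=> x y [].
rewrite /Iseq cat_uniq (map_inj_uniq i1) (map_inj_uniq i2) iota_uniq /= andbT.
apply/hasPn => x /mapP [j _ ->]; apply/mapP => [[l _]].
move=> h; have : (0 < Posz j.+1) by []. by rewrite h oppr_gt0.
Qed.

Lemma IseqN N k : (- k \in Iseq N) = (k \in Iseq N).
Proof. by rewrite !mem_Iseq oppr_eq0 abszN. Qed.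

Lemma sum_if_eq (V : zmodType) (T : eqType) (s : seq T) (b : T) (f : T -> V) :
  uniq s -> b \in s -> \sum_(k <- s) (if k == b then f k else 0) = f b.
Proof.
elim: s => // x s IH /= /andP [xs us]; rewrite in_cons big_cons.
case: eqP => [->|nb] /=.
- rewrite eqxx big1_seq ?addr0 // => k /andP [_ ks]; case: eqP => // kb.
  by move: xs; rewrite -kb ks.
- move/eqP/negbTE: nb; rewrite eq_sym => -> /=.
  by rewrite add0r => bs; apply: IH.
Qed.

Lemma sum_if_const (V : zmodType) (T : Type) (s : seq T) (P : bool) (f : T -> V) :
  \sum_(k <- s) (if P then f k else 0) = if P then \sum_(k <- s) f k else 0.
Proof. by case: P => //; rewrite big1. Qed.

Lemma kbarN (x : int) : x != 0 -> kbar (- x) = ~~ kbar x.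
Proof. by rewrite /kbar oppr_lt0 -leNgt => x0; rewrite lt_def x0. Qed.

Lemma ssignM (R : fieldType) a b c k d :
  ssign R a b c k * ssign R a b k d = ssign R a b c d.
Proof.
rewrite /ssign -signr_addb /parF; congr (_ ^+ _).
by case: (kbar a); case: (kbar b); case: (kbar c); case: (kbar k); case: (kbar d).
Qed.

Lemma ssign_c1 (R : fieldType) a b c :
  (-1) ^+ kbar b * ssign R a b c b = (-1) ^+ kbar a * ssign R a b c a.
Proof.
rewrite /ssign -!signr_addb /parF; congr (_ ^+ _).
by case: (kbar a); case: (kbar b); case: (kbar c).
Qed.

Lemma ssign_c2 (R : fieldType) a b c : a != 0 -> b != 0 ->
  (-1) ^+ kbar (- b) * ssign R a b c (- b) = (-1) ^+ kbar (- a) * ssign R a b c (- a).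
Proof.
move=> a0 b0; rewrite /ssign -!signr_addb /parF !kbarN //; congr (_ ^+ _).
by case: (kbar a); case: (kbar b); case: (kbar c).
Qed.

Definition Eterm (R : fieldType) (V : lmodType R) (N : nat)
    (rho : int -> int -> V -> V) (m : nat) (a b c d : int) (w : V) : V :=
  (if c == b then Cact N rho m a d w else 0)
  + (if a == d then - (ssign R a b c d *: Cact N rho m c b w) else 0)
  + (if c == - b then Cact N rho m (- a) d w else 0)
  + (if - a == d then - (ssign R a b c d *: Cact N rho m c (- b) w) else 0).

Lemma base_rel (R : fieldType) (V : lmodType R) (N : nat) (rho : int -> int -> V -> V) :
  qN_module N rho -> forall a b c d, a \in Iseq N -> b \in Iseq N -> c \in Iseq N -> d \in Iseq N ->
  forall w, rho a b (rho c d w) = ssign R a b c d *: rho c d (rho a b w) + Eterm N rho 0 a b c d w.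
Proof.
case=> _ _ H a b c d aI bI cI dI w.
apply/eqP; rewrite addrC -subr_eq; apply/eqP; rewrite (H _ _ _ _ aI bI cI dI w) /Eterm /=.
by rewrite !scaleif; case: (c == b); case: (a == d); case: (c == - b); case: (-a == d);
  rewrite ?subr0 ?addr0.
Qed.

Lemma Cact_lin (R : fieldType) (V : lmodType R) (N : nat) (rho : int -> int -> V -> V) :
  (forall i j, linear (rho i j)) -> forall m c d, linear (Cact N rho m c d).
Proof.
move=> L; elim=> [|m IH] c d a u v /=; first exact: L.
rewrite scaler_sumr -big_split /=; apply: eq_bigr => k _.
by rewrite IH linD // linZ // scalerDr !scalerA mulrC.
Qed.

Lemma alg1 (R : fieldType) (V : lmodType R) (sg s1 s2 : R) (Y Z W : V) :
  sg *: (s1 *: (s2 *: Y + Z) + W) = (s1 * s2) *: (sg *: Y) + (sg *: (s1 *: Z) + sg *: W).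
Proof. by rewrite !scalerDr !scalerA addrA [s1 * s2 * sg]mulrC mulrA. Qed.

Lemma acfin (V: zmodType) (u p w q r t : V): (u + p + w + q) + (r + -u + t + -w) = r + p + t + q.
Proof.
have h1 (x y z : V) : (x + y) + (z - x) = z + y by rewrite addrC addrA subrK.
by rewrite -(addrA (u + p)) -(addrA (r - u)) addrACA !h1 addrA.
Qed.

Lemma sum_if_eq' (V : zmodType) (T : eqType) (s : seq T) (b : T) (f : T -> V) :
  uniq s -> b \in s -> \sum_(k <- s) (if b == k then f k else 0) = f b.
Proof. by move=> us bs; rewrite -(sum_if_eq f us bs); apply: eq_bigr => k _; rewrite eq_sym. Qed.

Lemma alg2 (R : fieldType) (V : lmodType R) (sg s1 s2 : R) (X : V) :
  sg *: (s1 *: - (s2 *: X)) = - ((s1 * s2) *: (sg *: X)).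
Proof. by rewrite !scalerN !scalerA [s1 * s2 * sg]mulrC mulrA. Qed.

Lemma comm_rel (R : fieldType) (V : lmodType R) (N : nat) (rho : int -> int -> V -> V) :
  qN_module N rho -> forall m a b c d, a \in Iseq N -> b \in Iseq N -> c \in Iseq N -> d \in Iseq N ->
  forall w, rho a b (Cact N rho m c d w) = ssign R a b c d *: Cact N rho m c d (rho a b w) + Eterm N rho m a b c d w.
Proof.
move=> Q; have [L _ _] := Q.
elim=> [|m IH] a b c d aI bI cI dI w; first exact: base_rel.
rewrite /= (linS (L a b)).
under eq_big_seq => k kI do rewrite (linZ (L a b)) (base_rel Q aI bI cI kI) (IH _ _ _ _ aI bI kI dI) (linD (L c k)) (linZ (L c k)) alg1 ssignM.
rewrite big_split /= -scaler_sumr; congr (_ + _).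
rewrite big_split /=.
under eq_bigr => k _ do rewrite /Eterm !(linD (L c k)) !(linif (L c k)) !(linN (L c k)) !(linZ (L c k)) !scalerDr !scaleif.
under [X in _ + X]eq_bigr => k _ do rewrite /Eterm /= !scalerDr !scaleif.
rewrite !big_split /=.
have nI x : x \in Iseq N -> - x \in Iseq N by rewrite IseqN.
have U := Iseq_uniq N.
rewrite (sum_if_eq _ U bI) (sum_if_eq _ U (nI _ bI)) (sum_if_eq' _ U aI) (sum_if_eq' _ U (nI _ aI)).
rewrite !sum_if_const.
under [X in if a == d then X else 0]eq_bigr => k _ do rewrite alg2 ssignM.
under [X in if - a == d then X else 0]eq_bigr => k _ do rewrite alg2 ssignM.
rewrite !sumrN -!scaler_sumr.
rewrite !scalerA !scalerN !scalerA ssign_c1 ssign_c2 //; last 2 first.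
- by move: aI; rewrite mem_Iseq => /andP [].
- by move: bI; rewrite mem_Iseq => /andP [].
by rewrite acfin /Eterm /=.
Qed.

Lemma eqxN (x : int) : (x == - x) = (x == 0).
Proof. by rewrite eq_sym eqNr. Qed.

Lemma Iseq_neq0 N x : x \in Iseq N -> x != 0.
Proof. by rewrite mem_Iseq => /andP []. Qed.

Lemma vanish (R : fieldType) (V : lmodType R) (N : nat) (rho : int -> int -> V -> V) (v : V) :
  qN_module N rho ->
  (forall i j, i \in Iseq N -> j \in Iseq N -> (`|i| < `|j|)%N -> rho i j v = 0) ->
  forall m k j, k \in Iseq N -> j \in Iseq N -> (`|k| < `|j|)%N -> Cact N rho m k j v = 0.
Proof.
move=> Q Hv; have [L _ _] := Q.
elim=> [|m IH] k j kI jI kj /=; first exact: Hv.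
apply: big1_seq => l /andP [_ lI].
case: (ltnP `|l| `|j|) => h.
  by rewrite IH // (lin0 (L k l)) scaler0.
have kl : (`|k| < `|l|)%N by apply: leq_trans h.
rewrite (comm_rel Q m kI lI lI jI) (Hv k l) // (lin0 (Cact_lin N L m l j)) scaler0 add0r.
rewrite /Eterm eqxx IH // eqxN (negbTE (Iseq_neq0 lI)).
have -> : (k == j) = false by apply/negbTE/eqP => e; move: kj; rewrite e ltnn.
have -> : (- k == j) = false by apply/negbTE/eqP => e; move: kj; rewrite -e abszN ltnn.
by rewrite !addr0 scaler0.
Qed.

Lemma sign_sum (R : fieldType) N (P : nat -> bool) :
  \sum_(k <- Iseq N | P `|k|%N) ((-1) ^+ kbar k : R) = 0.
Proof.
rewrite /Iseq big_cat !big_map /=.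
by rewrite -big_split /=; apply: big1 => j _; rewrite expr1 expr0 addNr.
Qed.

Lemma kbar_pos (i : nat) : kbar (Posz i) = false.
Proof. by []. Qed.

Lemma kbar_neg (i : nat) : (0 < i)%N -> kbar (- Posz i) = true.
Proof. by case: i. Qed.

Lemma absz_cases (k : int) (i : nat) : `|k|%N = i -> k = Posz i \/ k = - Posz i.
Proof. by case: k => n /= <-; [left | right; rewrite NegzE]. Qed.

Unset Implicit Arguments. Set Strict Implicit.
Theorem mainTheorem7 (R : fieldType) (V : lmodType R) (N : nat)
  (rho : int -> int -> V -> V) (v : V) (lambda : nat -> R) :
  (1 <= N)%N ->
  qN_module N rho ->
  (forall i j, i \in Iseq N -> j \in Iseq N -> (`|i| < `|j|)%N ->
     rho i j v = 0) ->
  (forall i : nat, (1 <= i <= N)%N -> rho (Posz i) (Posz i) v = lambda i *: v) ->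
  forall (n i : nat), (1 <= n)%N -> (1 <= i <= N)%N ->
    C N rho n.+1 (- Posz i) (Posz i) v =
      rho (- Posz i) (Posz i) (C N rho n (Posz i) (Posz i) v)
      - lambda i *: C N rho n (- Posz i) (Posz i) v
      - \sum_(k <- Iseq N | (i < `|k|)%N)
          ((-1) ^+ kbar k) *: C N rho n k (- k) v.
Proof.
move=> N1 Q Hv Hl n i n1 /andP [i1 iN].
have [L HN _] := Q.
case: n n1 => // m _; rewrite /C /=.
have iI : Posz i \in Iseq N by rewrite mem_Iseq /= iN andbT -lt0n.
have niI : - Posz i \in Iseq N by rewrite IseqN.
have i0 : Posz i != 0 by rewrite -lt0n.
pose Z k := (if k == Posz i then rho (- Posz i) (Posz i) (Cact N rho m (Posz i) (Posz i) v) else 0)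
  + (if k == - Posz i then - (lambda i *: Cact N rho m (- Posz i) (Posz i) v) else 0)
  + (if (i < `|k|)%N then (-1) ^+ kbar k *: Cact N rho m (- Posz i) (Posz i) v else 0)
  - (if (i < `|k|)%N then (-1) ^+ kbar k *: Cact N rho m k (- k) v else 0).
have pw : {in Iseq N, forall k, (-1) ^+ kbar k *: rho (- Posz i) k (Cact N rho m k (Posz i) v) = Z k}.
  move=> k kI; rewrite /Z.
  case: (k =P Posz i) => [->|ki].
    rewrite kbar_pos expr0 scale1r eqxN (negbTE i0) ltnn /=.
    by rewrite !addr0 subr0.
  case: (k =P - Posz i) => [->|kni].
    rewrite abszN ltnn /= kbar_neg // expr1 scaleN1r HN //.
    rewrite (comm_rel Q m iI iI niI iI) Hl ?i1 // (linZ (Cact_lin N L m _ _)).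
    rewrite /Eterm eqxx eq_sym eqxN (negbTE i0) /ssign /parF addbb /= expr0 !scale1r.
    by rewrite eqxx sub0r addNr !addr0 !add0r subr0.
  case: (ltngtP i `|k|) => h.
  - rewrite (comm_rel Q m niI kI kI iI) (Hv _ _ niI kI) ?abszN //.
    rewrite (lin0 (Cact_lin N L m _ _)) scaler0 add0r /Eterm eqxx opprK eqxx.
    rewrite eq_sym eqxN (negbTE i0) eqxN (negbTE (Iseq_neq0 kI)) /ssign /parF kbar_neg //.
    have -> : (true (+) kbar k) && (kbar k (+) kbar (Posz i)) = false by rewrite kbar_pos; case: (kbar k).
    by rewrite expr0 scale1r !addr0 add0r scalerBr.
  - rewrite (vanish Q Hv m kI iI) ?(lin0 (L _ _)) ?scaler0 //.
    by rewrite addr0 add0r subr0.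
  - by case: (absz_cases (esym h)) => e.
rewrite (eq_big_seq _ pw) /Z !big_split /= sumrN.
rewrite (sum_if_eq _ (Iseq_uniq N) iI) (sum_if_eq _ (Iseq_uniq N) niI).
rewrite -!big_mkcond -scaler_suml (sign_sum R N (fun x => (i < x)%N)) scale0r addr0.
by [].
Qed.
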